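(* Let $\mathcal{A}$ be any deterministic algorithm which takes as input a function $g:\mathbb{R}^d\to\mathbb{R}$, accesses $g$ only through zeroth-, first- and second-order oracle queries (values of $g$, $\nabla g$, $\nabla^2 g$ at query points), and outputs a single point $\tilde x(g)\in\mathbb{R}^d$. Then there exists a function $\mathfrak{f}:\mathbb{R}^d\to\mathbb{R}$ that is $1$-Lipschitz, has $8$-Lipschitz gradient, satisfies $\sup_x\mathfrak{f}(x)-\inf_x\mathfrak{f}(x)\le\frac1e$, and has a global minimizer $x^\star\in B(0,10)$, such that $\mathcal{A}(\mathfrak{f})$ must make at least $2^d$ oracle calls to find an $\epsilon$-global minimizer $x^\circ$ of $\mathfrak{f}$ with $\epsilon=\frac{1}{2e}$, i.e. a point with $\mathfrak{f}(x^\circ)-\mathfrak{f}(x^\star)\le\epsilon$.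
   Context: $B(c,r)$ denotes the closed Euclidean ball of radius $r$ centered at $c$. *)

(* Defs.v *)
From HB Require Import structures.
From mathcomp Require Import all_boot all_order all_algebra.
From mathcomp Require Import all_classical all_reals all_analysis.
Set Implicit Arguments. Unset Strict Implicit. Unset Printing Implicit Defensive.
Import Order.TTheory GRing.Theory Num.Theory.
Import numFieldNormedType.Exports.
Local Open Scope ring_scope.

Section Defs.
Variables (R : realType) (d : nat).

Notation pt := 'rV[R]_d.

(* Euclidean norm (the library norm on matrices is the max norm). *)
Definition enorm (x : pt) : R := Num.sqrt (\sum_(i < d) (x 0 i) ^+ 2).

Definition ebasis (i : 'I_d) : pt := delta_mx 0 i.

Definition gradient (g : pt -> R) (x : pt) : pt :=
  \row_(i < d) ('D_(ebasis i) g x).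
Definition hessian (g : pt -> R) (x : pt) : 'M[R]_d :=
  \matrix_(i < d, j < d) ('D_(ebasis j) (fun y => 'D_(ebasis i) g y) x).

Definition answer := (R * pt * 'M[R]_d)%type.
Definition oracle (g : pt -> R) (x : pt) : answer :=
  (g x, gradient g x, hessian g x).

(* A deterministic algorithm: given the history of (query, answer) pairs so
   far, it either issues a new oracle query or stops and outputs a point. *)
Inductive action := Query of pt | Output of pt.
Definition algorithm := seq (pt * answer) -> action.

(* Run the algorithm on g with at most [n] steps; returns [Some x] if the
   algorithm outputs x after at most n-1 oracle queries. *)
Fixpoint run (A : algorithm) (g : pt -> R) (n : nat) (hist : seq (pt * answer))
  : option pt :=
  match n with
  | 0 => None
  | n'.+1 =>
    match A hist with
    | Output x => Some x
    | Query q => run A g n' (rcons hist (q, oracle g q))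
    end
  end.

Definition lipschitz_with (L : R) (h : pt -> R) :=
  forall x y, `|h x - h y| <= L * enorm (x - y).

Definition grad_lipschitz_with (L : R) (h : pt -> R) :=
  (forall x, differentiable h x) /\
  forall x y, enorm (gradient h x - gradient h y) <= L * enorm (x - y).

End Defs.

(* Main.v *)
Require Import Defs.
From HB Require Import structures.
From mathcomp Require Import all_boot all_order all_algebra.
From mathcomp Require Import all_classical all_reals all_analysis.
From mathcomp Require Import ring lra.
Import Order.TTheory GRing.Theory Num.Theory.
Import numFieldNormedType.Exports.
Set Implicit Arguments. Unset Strict Implicit. Unset Printing Implicit Defensive.
Local Open Scope classical_set_scope.
Local Open Scope ring_scope.
Section Enorm.
Variables (R : realType) (d : nat).
Notation pt := 'rV[R]_d.

Definition dot (u v : pt) : R := \sum_(i < d) u 0 i * v 0 i.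

Lemma dotuu (u : pt) : dot u u = \sum_(i < d) (u 0 i) ^+ 2.
Proof. by apply: eq_bigr => i _; rewrite expr2. Qed.

Lemma dot_ge0 (u : pt) : 0 <= dot u u.
Proof. by rewrite dotuu; apply: sumr_ge0 => i _; rewrite sqr_ge0. Qed.

Lemma enormE (u : pt) : enorm u = Num.sqrt (dot u u).
Proof. by rewrite /enorm dotuu. Qed.

Lemma enorm_ge0 (u : pt) : 0 <= enorm u.
Proof. by rewrite enormE sqrtr_ge0. Qed.

Lemma enorm_sq (u : pt) : enorm u ^+ 2 = dot u u.
Proof. by rewrite enormE sqr_sqrtr // dot_ge0. Qed.

Lemma CS (u v : pt) : dot u v ^+ 2 <= dot u u * dot v v.
Proof.
have H : 0 <= \sum_(i < d) \sum_(j < d) (u 0 i * v 0 j - u 0 j * v 0 i) ^+ 2.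
  by apply: sumr_ge0 => i _; apply: sumr_ge0 => j _; rewrite sqr_ge0.
have E1 : dot u u * dot v v = \sum_(i < d) \sum_(j < d) (u 0 i * v 0 j) ^+ 2.
  rewrite /dot big_distrl /=; apply: eq_bigr => i _.
  rewrite big_distrr /=; apply: eq_bigr => j _; ring.
have E1' : dot u u * dot v v = \sum_(i < d) \sum_(j < d) (u 0 j * v 0 i) ^+ 2.
  rewrite E1 exchange_big /=; done.
have E2 : dot u v ^+ 2 = \sum_(i < d) \sum_(j < d) (u 0 i * v 0 j) * (u 0 j * v 0 i).
  rewrite expr2 /dot big_distrl /=; apply: eq_bigr => i _.
  rewrite big_distrr /=; apply: eq_bigr => j _; ring.
have E3 : \sum_(i < d) \sum_(j < d) (u 0 i * v 0 j - u 0 j * v 0 i) ^+ 2 =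
   (dot u u * dot v v) + (dot u u * dot v v) - 2 * dot u v ^+ 2.
  rewrite {1}E1 {1}E1' E2 -big_split /= mulr_sumr -sumrB; apply: eq_bigr => i _.
  rewrite -big_split /= mulr_sumr -sumrB; apply: eq_bigr => j _; ring.
move: H; rewrite E3; lra.
Qed.

Lemma dot_le (u v : pt) : dot u v <= enorm u * enorm v.
Proof.
have h1 := enorm_ge0 u; have h2 := enorm_ge0 v.
have := CS u v; rewrite -!enorm_sq => H.
have : `|dot u v| <= enorm u * enorm v.
  rewrite -(ger0_norm (mulr_ge0 h1 h2)); rewrite -ler_sqr ?inE ?normr_ge0 //.
  by rewrite !real_normK ?num_real // exprMn.
by apply: le_trans; rewrite ler_norm.
Qed.

Lemma dotD (u v w : pt) : dot (u + v) w = dot u w + dot v w.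
Proof. by rewrite /dot -big_split; apply: eq_bigr => i _; rewrite mxE mulrDl. Qed.
Lemma dotC (u v : pt) : dot u v = dot v u.
Proof. by apply: eq_bigr => i _; rewrite mulrC. Qed.
Lemma dotZ (k : R) (u v : pt) : dot (k *: u) v = k * dot u v.
Proof. by rewrite /dot mulr_sumr; apply: eq_bigr => i _; rewrite mxE mulrA. Qed.
Lemma dotN (u v : pt) : dot (- u) v = - dot u v.
Proof. by rewrite -scaleN1r dotZ mulN1r. Qed.

Lemma enormD (u v : pt) : enorm (u + v) <= enorm u + enorm v.
Proof.
have h1 := enorm_ge0 u; have h2 := enorm_ge0 v; have h3 := enorm_ge0 (u + v).
rewrite -ler_sqr ?inE ?addr_ge0 //.
rewrite enorm_sq dotD !(dotC _ (u + v)) !dotD sqrrD -!enorm_sq.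
  have := dot_le u v; rewrite mulr2n (dotC v u); lra.
by rewrite nnegrE addr_ge0.
Qed.

Lemma enormZ (k : R) (u : pt) : enorm (k *: u) = `|k| * enorm u.
Proof.
rewrite !enormE dotZ dotC dotZ mulrA -expr2 sqrtrM ?sqr_ge0 // sqrtr_sqr.
by [].

Qed.

Lemma enormN (u : pt) : enorm (- u) = enorm u.
Proof. by rewrite -scaleN1r enormZ normrN normr1 mul1r. Qed.

Lemma enormB_sym (u v : pt) : enorm (u - v) = enorm (v - u).
Proof. by rewrite -enormN opprB. Qed.

Lemma enorm_rev (u v : pt) : `|enorm u - enorm v| <= enorm (u - v).
Proof.
rewrite ler_norml; apply/andP; split.
  have := enormD (v - u) u; rewrite subrK enormB_sym; lra.
have := enormD (u - v) v; rewrite subrK; lra.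
Qed.

End Enorm.

Section Reals.
Variable R : realType.
Definition mm (s : R) : R := Num.max 0 (1 - s).
Definition Phi (s : R) : R := mm s ^+ 2.

Lemma mmE1 s : s <= 1 -> mm s = 1 - s.
Proof. by move=> h; rewrite /mm max_r // subr_ge0. Qed.
Lemma mmE2 s : 1 <= s -> mm s = 0.
Proof. by move=> h; rewrite /mm max_l // subr_le0. Qed.

Lemma mm_ge0 s : 0 <= mm s.
Proof. by rewrite /mm le_max lexx. Qed.
Lemma mm_le1 s : 0 <= s -> mm s <= 1.
Proof. by move=> h; rewrite /mm ge_max ler01 /=; lra. Qed.

Lemma Phi_lip_aux (t t' : R) : 0 <= t -> t <= t' ->
  `|Phi (t ^+ 2) - Phi (t' ^+ 2)| <= 2 * (t' - t).
Proof.
move=> t0 tt; rewrite /Phi.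
have [t1|t1] := leP t 1; have [t'1|t'1] := leP t' 1.
- rewrite !mmE1; [|nra|nra].
  have ha : 0 <= t + t' by lra.
  have hb : (t + t') * (2 - t^+2 - t'^+2) <= 2.
    have h1 : 0 <= (t + t' - 6/5)^+2 * (t + t' + 12/5) + 8/25 * (t+t') + 68/125.
      by apply: addr_ge0; [apply: addr_ge0; [apply: mulr_ge0; [rewrite sqr_ge0|lra]|lra]|lra].
    have h2 : 0 <= (t - t')^+2 * (t + t') by apply: mulr_ge0; [rewrite sqr_ge0|lra].
    nra.
  have hA : 0 <= 1 - t'^+2 by nra.
  have hB : 1 - t'^+2 <= 1 - t^+2 by nra.
  rewrite ger0_norm; last first.
    rewrite subr_ge0; rewrite !expr2; apply: ler_pM => //.
  have -> : (1 - t ^+ 2) ^+ 2 - (1 - t' ^+ 2) ^+ 2 = (t' - t) * ((t + t') * (2 - t^+2 - t'^+2)) by ring.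
  have : 0 <= t' - t by lra.
  move=> h; rewrite mulrC; apply: ler_wpM2r => //.
- rewrite mmE1; last nra. rewrite mmE2; last nra.
  rewrite expr0n /= subr0 ger0_norm ?sqr_ge0 //.
  have : (1 - t) * (1 + t)^+2 <= 2 by nra.
  nra.
- lra.
- rewrite !mmE2; [|nra|nra]. by rewrite expr0n /= subrr normr0; lra.
Qed.

Lemma Phi_lip (t t' : R) : 0 <= t -> 0 <= t' ->
  `|Phi (t ^+ 2) - Phi (t' ^+ 2)| <= 2 * `|t - t'|.
Proof.
move=> t0 t'0; have [h|h] := leP t t'.
  by rewrite (distrC t t') (ger0_norm (x := t' - t)) ?subr_ge0 //; apply: Phi_lip_aux => //; lra.
rewrite distrC (ger0_norm (x := t - t')); last lra.
apply: Phi_lip_aux => //; lra.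
Qed.

Lemma mm_lip (t t' : R) : 0 <= t -> 0 <= t' -> t' <= 1 ->
  `|mm (t ^+ 2) - mm (t' ^+ 2)| <= 2 * `|t - t'|.
Proof.
move=> t0 t'0 t'1.
have [t1|t1] := leP t 1.
  rewrite !mmE1; [|nra|nra].
  have -> : 1 - t ^+ 2 - (1 - t' ^+ 2) = (t' - t) * (t' + t) by ring.
  rewrite normrM (ger0_norm (x := t' + t)); last lra.
  rewrite distrC; have := normr_ge0 (t - t'); nra.
rewrite (mmE2 (s := t^+2)); last nra. rewrite mmE1; last nra.
rewrite (ger0_norm (x := t - t')); last lra. rewrite ler0_norm; last nra. nra.
Qed.


Lemma Phi_derive (s : R) : is_derive s 1 Phi (-2 * mm s).
Proof.
have [s1|s1|->] := ltgtP s 1.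
- have D : is_derive s 1 ((cst 1 - id) ^+ 2 : R -> R) ((2%:R * (cst 1 - id) s ^+ 1) *: (0 - 1)).
    by apply: is_deriveX; apply: is_deriveB.
  have H : \forall t \near s, ((cst 1 - id) ^+ 2 : R -> R) t = Phi t.
    near=> t. rewrite /Phi mmE1 ?exprfctE //. apply/ltW. near: t. exact: lt_nbhsl.
  apply: is_derive_eq; first exact: (near_eq_is_derive H D).
  change ((cst 1 - id) s) with (1 - s).
  rewrite mmE1 ?ltW // /GRing.scale /= expr1; ring.
- have H : \forall t \near s, (cst 0 : R -> R) t = Phi t.
    near=> t. rewrite /Phi mmE2 ?expr0n //. apply/ltW. near: t. exact: lt_nbhsr.
  apply: (near_eq_is_derive H).
  by rewrite mmE2 ?ltW // mulr0; exact: is_derive_cst.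
- have E : (fun h : R => h^-1 *: ((Phi \o shift 1) (h *: 1) - Phi 1)) = (fun h => Num.min h 0).
    apply/funext => h /=.
    rewrite /Phi (mmE2 (lexx _)) expr0n /= subr0 /GRing.scale /= mulr1.
    have [h0|h0] := leP 0 h.
      rewrite mmE2; last lra. by rewrite expr0n /= mulr0.
    rewrite mmE1; last lra.
    have -> : 1 - (h + 1) = - h by ring.
    rewrite sqrrN expr2 mulrA mulVf ?mul1r //; lra.
  have C : (fun h : R => Num.min h 0) @ 0^' --> (0 : R).
    have H : {for 0, continuous ((id : R -> R^o) \min (cst 0 : R -> R^o))}.
      by apply: continuous_min; [exact: cvg_id| exact: cvg_cst].
    have := (continuous_withinNx _ _).1 H.
    by rewrite /Order.min_fun /= minxx.
  have D : derivable Phi 1 1 by rewrite /derivable E; apply/cvg_ex; exists 0.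
  apply: DeriveDef => //.
  rewrite /derive E (cvg_lim _ C) //.
  by rewrite mmE2 // mulr0.
Unshelve. all: by end_near. Qed.
End Reals.
Section Coord.
Variables (R : realType) (d : nat).
Notation pt := 'rV[R]_d.

Lemma coord_derive (i : 'I_d) (x v : pt) :
  is_derive x v (fun y : pt => y 0 i) (v 0 i).
Proof.
apply: DeriveDef; first exact/diff_derivable/differentiable_coord.
rewrite /derive; apply: cvg_lim => //.
have H : \forall h \near (0 : R)^', (cst (v 0 i) : R -> R) h =
   (fun h : R => h^-1 *: (((fun y : pt => y 0 i) \o shift x) (h *: v) - x 0 i)) h.
  near=> h => /=.
  rewrite !mxE /GRing.scale /= addrK mulrA mulVf ?mul1r //.
  near: h; exact: nbhs_dnbhs_neq.
apply: cvg_trans (near_eq_cvg H) _; exact: cvg_cst.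
Unshelve. all: by end_near. Qed.


Variable c : pt.
Definition Sq (x : pt) : R := \sum_(i < d) (x 0 i - c 0 i) ^+ 2.

Lemma SqE : Sq = \sum_(i < d) (((fun y : pt => y 0 i) - cst (c 0 i)) ^+ 2).
Proof. by rewrite fct_sumE; apply/funext => x; apply: eq_bigr => i _; rewrite exprfctE. Qed.

Lemma Sq_derive (x v : pt) :
  is_derive x v Sq (\sum_(i < d) (2 * (x 0 i - c 0 i)) * v 0 i).
Proof.
rewrite SqE; apply: is_derive_eq.
  apply: is_derive_sum => i; apply: is_deriveX; apply: is_deriveB; first exact: coord_derive.

apply: eq_bigr => i _ /=; by rewrite /GRing.scale /= expr1 subr0.
Qed.

Lemma Sq_diff (x : pt) : differentiable Sq x.
Proof.
rewrite SqE; apply: differentiable_sum => i; apply: differentiableX.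
apply: differentiableB; [exact: differentiable_coord | exact: differentiable_cst].
Qed.

Variable k : R.
Definition G (s : R) : R := k * Phi s.
Definition F (x : pt) : R := G (Sq x).

Lemma G_derive (s : R) : is_derive s (1 : R) G (k * (-2 * mm s)).
Proof.
have -> : G = k *: (@Phi R) by [].
apply: is_deriveZ; exact: Phi_derive.
Qed.

Lemma F_diff x : differentiable F x.
Proof.
apply: (differentiable_comp (Sq_diff x)).
apply/derivable1_diffP; exact: (@ex_derive _ _ _ _ _ _ _ (G_derive _)).
Qed.

Lemma F_derive x v :
  'D_v F x = k * (-2 * mm (Sq x)) * \sum_(i < d) (2 * (x 0 i - c 0 i)) * v 0 i.
Proof.
rewrite deriveE; last exact: F_diff.
have dG : differentiable G (Sq x).
  apply/derivable1_diffP; exact: (@ex_derive _ _ _ _ _ _ _ (G_derive _)).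
rewrite /F -/(G \o Sq) (diff_comp (Sq_diff x) dG).
rewrite /= -(@deriveE _ _ _ Sq x v (Sq_diff x)).
rewrite (@derive_val _ _ _ _ _ _ _ (Sq_derive x v)).
rewrite diff1E; last by apply/derivable1_diffP; exact: (@ex_derive _ _ _ _ _ _ _ (G_derive _)).
rewrite derive1E (@derive_val _ _ _ _ _ _ _ (G_derive _)) /GRing.scale /=; ring.
Qed.

End Coord.

Close Scope classical_set_scope.
Section Count.
Variables (R : realType) (d : nat).
Hypothesis d0 : (0 < d)%N.
Notation pt := 'rV[R]_d.

Definition al : R := 10 / Num.sqrt (d%:R).

Lemma al_gt0 : 0 < al.
Proof. by rewrite /al divr_gt0 // sqrtr_gt0 ltr0n. Qed.

Lemma al2 : al ^+ 2 * d%:R = 100.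
Proof.
have hd : (0 : R) < d%:R by rewrite ltr0n.
rewrite /al expr_div_n sqr_sqrtr ?ler0n //.
field; lra.
Qed.

Definition cand (s : {ffun 'I_d -> 'I_3}) : pt := \row_i (al * ((s i)%:R - 1)).

Definition nearb (p : pt) (i : 'I_d) (s : 'I_3) : bool := `|al * (s%:R - 1) - p 0 i| < al / 2.

Definition lam : R := 9 / 10.
Definition aa : R := lam ^+ 25.

Definition w (p : pt) (i : 'I_d) (s : 'I_3) : R := if nearb p i s then 1 else aa.

Lemma aa_ge0 : 0 <= aa. Proof. by rewrite /aa exprn_ge0 // /lam; lra. Qed.
Lemma aa_le1 : aa <= 1. Proof. by rewrite /aa exprn_ile1 // /lam; lra. Qed.

Lemma aa_small : aa <= 1 / 10.
Proof. rewrite /aa /lam !exprS expr0; lra. Qed.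

Lemma w_ge0 p i s : 0 <= w p i s.
Proof. by rewrite /w; case: ifP => _ //; exact: aa_ge0. Qed.

Lemma sum_w p i : \sum_(s < 3) w p i s <= 1 + 2 * aa.
Proof.
rewrite !big_ord_recl big_ord0 /= /w /nearb /=.
have ha := al_gt0; have h0 := aa_ge0; have h1 := aa_le1.
set x := p 0 i.
rewrite !ltr_norml.
case: (boolP (_ < _ < _)) => /andP H0 /=;
case: (boolP (_ < _ < _)) => /andP H1 /=;
case: (boolP (_ < _ < _)) => /andP H2 /=;
move: H0 H1 H2; rewrite /bump /= ?add1n ?addn0; move=> *; nra.
Qed.

Lemma blocked_bound (p : pt) (s : {ffun 'I_d -> 'I_3}) :
  Sq (cand s) p <= 1 -> lam ^+ d <= \prod_(i < d) w p i (s i).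
Proof.
move=> H.
pose B := [set i | ~~ nearb p i (s i)].
have -> : \prod_(i < d) w p i (s i) = aa ^+ #|B|.
  rewrite -prodr_const (bigID (fun i => i \in B)) /=.
  rewrite [X in _ * X]big1 ?mulr1; last first.
    by move=> i; rewrite inE negbK /w => ->.
  by apply: eq_bigr => i; rewrite inE /w => /negPf ->.
have hB : (#|B| * 25 <= d)%N.
  have ha := al_gt0.
  have : #|B|%:R * (al ^+ 2 / 4) <= 1.
    apply: le_trans H.
    rewrite mulr_natl -sumr_const /Sq.
    rewrite [X in _ <= X](bigID (fun i => i \in B)) /=.
    rewrite -[X in X <= _]addr0; apply: lerD; last first.
      by apply: sumr_ge0 => i _; rewrite sqr_ge0.
    apply: ler_sum => i; rewrite inE /nearb -leNgt => Hi.
    rewrite mxE.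
    have : al / 2 <= `|p 0 i - al * ((s i)%:R - 1)| by rewrite distrC.
    set y := p 0 i - _ => Hy.
    have Hn : `|y| ^+ 2 = y ^+ 2 by rewrite real_normK ?num_real.
    rewrite -Hn; nra.
  have := al2; move=> E.
  rewrite -(ler_nat R) natrM => h.
  have hd : (0 : R) < d%:R by rewrite ltr0n.
  have : #|B|%:R * (al ^+ 2 * d%:R) <= d%:R * 4.
    have := ler_wpM2r (ltW hd) h. rewrite mul1r; lra.
  rewrite E; lra.
rewrite /aa -exprM; apply: ler_wiXn2l.
- by rewrite /lam; lra.
- by rewrite /lam; lra.
by rewrite mulnC.
Qed.


Lemma cand_norm s : enorm (cand s) <= 10.
Proof.
have ha := al_gt0.
rewrite /enorm.
have -> : (10 : R) = Num.sqrt (10 ^+ 2) by rewrite sqrtr_sqr ger0_norm.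
rewrite ler_sqrt; last by rewrite sqr_ge0.
have -> : (10 : R) ^+ 2 = al ^+ 2 * d%:R by rewrite al2; lra.
have -> : al ^+ 2 * d%:R = \sum_(i < d) al ^+ 2 by rewrite sumr_const card_ord mulr_natr.
apply: ler_sum => i _; rewrite mxE exprMn.
rewrite -[X in _ <= X]mulr1; apply: ler_wpM2l; first by rewrite sqr_ge0.
by case: (s i) => [[|[|[|]]]] //= _; rewrite ?subrr ?expr0n //=; lra.
Qed.

Lemma sum_seq_const (C : R) (P : seq pt) : \sum_(p <- P) C = C *+ size P.
Proof. by elim: P => [|p P IH]; rewrite ?big_nil ?big_cons ?IH ?mulrS. Qed.

Lemma exists_far (P : seq pt) : (size P <= 2 ^ d)%N ->
  exists c : pt, enorm c <= 10 /\ forall p, p \in P -> 1 < Sq c p.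
Proof.
move=> HP.
case: (pselect (exists s, forall p, p \in P -> 1 < Sq (cand s) p)) => [[s Hs]|Hno].
  by exists (cand s); split => //; exact: cand_norm.
exfalso.
have Hall : forall s, exists2 p, p \in P & Sq (cand s) p <= 1.
  move=> s; apply: contrapT => H; apply: Hno; exists s => p pP.
  rewrite ltNge; apply/negP => h; apply: H; by exists p.
have hl : 0 < lam by rewrite /lam; lra.
have hld : 0 < lam ^+ d by rewrite exprn_gt0.
have E1 : (3 ^ d)%:R <= \sum_(s : {ffun 'I_d -> 'I_3}) \sum_(p <- P) (lam ^+ d)^-1 * \prod_(i < d) w p i (s i).
  have -> : (3 ^ d)%:R = \sum_(s : {ffun 'I_d -> 'I_3}) (1 : R).
    by rewrite sumr_const card_ffun !card_ord.
  apply: ler_sum => s _.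
  have [p pP Hp] := Hall s.
  rewrite (big_rem p pP) /=.
  have h1 : 1 <= (lam ^+ d)^-1 * \prod_(i < d) w p i (s i).
    by rewrite ler_pdivlMl // mulr1; exact: blocked_bound.
  have h2 : 0 <= \sum_(y <- rem p P) (lam ^+ d)^-1 * \prod_(i < d) w y i (s i).
    apply: sumr_ge0 => q _; apply: mulr_ge0; first by rewrite invr_ge0 ltW.
    by apply: prodr_ge0 => i _; exact: w_ge0.
  lra.
have E2 : \sum_(s : {ffun 'I_d -> 'I_3}) \sum_(p <- P) (lam ^+ d)^-1 * \prod_(i < d) w p i (s i)
    = \sum_(p <- P) (lam ^+ d)^-1 * \prod_(i < d) \sum_(j < 3) w p i j.
  rewrite exchange_big /=; apply: eq_bigr => p _.
  by rewrite bigA_distr_bigA /= mulr_sumr.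
have E3 : \sum_(p <- P) (lam ^+ d)^-1 * \prod_(i < d) \sum_(j < 3) w p i j
    <= \sum_(p <- P) (lam ^+ d)^-1 * (1 + 2 * aa) ^+ d.
  apply: ler_sum => p _; apply: ler_wpM2l; first by rewrite invr_ge0 ltW.
  rewrite -[X in _ <= _ ^+ X]card_ord -prodr_const; apply: ler_prod => i _.
  by rewrite sumr_ge0 ?sum_w // => j _; exact: w_ge0.
rewrite sum_seq_const in E3.
have hA : 0 <= (lam ^+ d)^-1 * (1 + 2 * aa) ^+ d.
  by apply: mulr_ge0; [rewrite invr_ge0 ltW | rewrite exprn_ge0 // addr_ge0 // mulr_ge0 // aa_ge0].
have E4 : (lam ^+ d)^-1 * (1 + 2 * aa) ^+ d *+ size P <= (lam ^+ d)^-1 * (1 + 2 * aa) ^+ d *+ 2 ^ d.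
  rewrite -(mulr_natr _ (size P)) -(mulr_natr _ (2 ^ d)); apply: ler_wpM2l => //; by rewrite ler_nat.
have C : (3 ^ d)%:R <= (lam ^+ d)^-1 * ((1 + 2 * aa) ^+ d * (2 ^ d)%:R).
  rewrite mulrA -(mulr_natr _ (2 ^ d)); apply: le_trans E1 _; rewrite E2; apply: le_trans E3 _.
  by apply: (le_trans E4); rewrite mul1r mulr_natr.
rewrite ler_pdivlMl // !natrX -!exprMn in C.
have aa_small := aa_small.
have : ((1 + 2 * aa) * 2) ^+ d < (lam * 3) ^+ d.
  rewrite ltrXn2r ?(gtn_eqF d0) //; last by rewrite /lam; lra.
  by apply: mulr_ge0 => //; have := aa_ge0; lra.
by rewrite ltNge C.
Qed.

End Count.

Local Open Scope classical_set_scope.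
Local Open Scope ring_scope.
Arguments oracle : simpl never.
Arguments gradient : simpl never.
Arguments hessian : simpl never.

Section Main.
Variables (R : realType) (d : nat).
Notation pt := 'rV[R]_d.

Fixpoint pts (A : algorithm R d) (g : pt -> R) (n : nat) (hist : seq (pt * answer R d)) : seq pt :=
  match n with
  | 0 => [::]
  | n'.+1 => match A hist with
             | Output x => [:: x]
             | Query q => q :: pts A g n' (rcons hist (q, oracle g q))
             end
  end.

Lemma pts_size A g n hist : (size (pts A g n hist) <= n)%N.
Proof.
elim: n hist => [|n IH] hist; first by [].
rewrite [pts _ _ _ _]/=; case: (A hist) => [q|x]; last by [].
rewrite [size _]/= ltnS; exact: IH.
Qed.

Lemma run_out A g n hist xo : run A g n hist = Some xo -> xo \in pts A g n hist.
Proof.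
elim: n hist => [|n IH] hist; first by [].
rewrite [run _ _ _ _]/= [pts _ _ _ _]/=; case: (A hist) => [q|x].
  move=> /IH H; rewrite in_cons H; exact: orbT.
by case=> ->; rewrite mem_seq1 eqxx.
Qed.

Lemma run_eq A g g0 n hist :
  (forall p, p \in pts A g0 n hist -> oracle g p = oracle g0 p) ->
  run A g n hist = run A g0 n hist.
Proof.
elim: n hist => [|n IH] hist; first by [].
rewrite [run A g _ _]/= [run A g0 _ _]/= [pts _ _ _ _]/=; case: (A hist) => [q|x] H; last by [].
rewrite (H q); last by rewrite in_cons eqxx.
apply: IH => p pP; apply: H; rewrite in_cons pP; exact: orbT.
Qed.

Lemma Sq_enorm (c x : pt) : Sq c x = enorm (x - c) ^+ 2.
Proof.
by rewrite enorm_sq dotuu /Sq; apply: eq_bigr => i _; rewrite !mxE.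
Qed.

Lemma Sq_ge0 (c x : pt) : 0 <= Sq c x.
Proof. by rewrite Sq_enorm sqr_ge0. Qed.

Lemma F_zero (c : pt) k (y : pt) : 1 <= Sq c y -> F c k y = 0.
Proof. by move=> h; rewrite /F /G /Phi mmE2 // expr0n /= mulr0. Qed.

Lemma oracle_far (c : pt) k (p : pt) : 1 < Sq c p ->
  oracle (F c k) p = oracle (fun _ => 0) p.
Proof.
move=> Hp.
pose U := [set y : pt | 1 < Sq c y].
have oU : open U.
  rewrite (_ : U = Sq c @^-1` [set x : R | 1 < x]) //.
  apply: open_comp; last exact: open_gt.
  move=> y _; exact/differentiable_continuous/Sq_diff.
have nU : forall y, U y -> \forall z \near y, F c k z = (fun _ : pt => (0 : R)) z.
  move=> y Uy; apply: filterS (open_nbhs_nbhs (conj oU Uy)) => z Uz.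
  by apply: F_zero; apply: ltW.
rewrite /oracle; congr (_, _, _).
- by apply: F_zero; apply: ltW.
- by apply/rowP => i; rewrite !mxE; apply: near_eq_derive; exact: nU.
- apply/matrixP => i j; rewrite !mxE; apply: near_eq_derive.
  apply: filterS (open_nbhs_nbhs (conj oU Hp)) => z Uz.
  by apply: near_eq_derive; exact: nU.
Qed.

End Main.

Section Final.
Variables (R : realType) (d : nat).
Notation pt := 'rV[R]_d.

Lemma F_grad (c : pt) k x : gradient (F c k) x = (- 4 * k * mm (Sq c x)) *: (x - c).
Proof.
apply/rowP => j; rewrite !mxE F_derive.
rewrite (bigD1 j) //= big1; last first.
  by move=> i /negPf hij; rewrite /ebasis !mxE hij andbF mulr0.
rewrite /ebasis !mxE !eqxx /= addr0; ring.
Qed.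

Lemma lip_F (c : pt) (h : R) : 0 <= h -> h <= 1/2 ->
  forall x y, `|F c (- h) x - F c (- h) y| <= 1 * enorm (x - y).
Proof.
move=> h0 h1 x y.
rewrite /F /G !Sq_enorm -mulrBr normrM normrN (ger0_norm h0).
have H := Phi_lip (enorm_ge0 (x - c)) (enorm_ge0 (y - c)).
have H2 := enorm_rev (x - c) (y - c).
move: H2; rewrite (_ : x - c - (y - c) = x - y); last by rewrite opprB addrA subrK.
have := normr_ge0 (Phi (enorm (x - c) ^+ 2) - Phi (enorm (y - c) ^+ 2)).
move: H; set P := `|_ - _|; set Q := `|_ - _|; move=> H H2 H3.
have H4 : P <= 2 * enorm (x - y) by lra.
have H5 : h * P <= 1/2 * P by apply: ler_wpM2r.
lra.
Qed.


Lemma grad_core (u v : pt) (h : R) : 0 <= h -> h <= 1/2 -> enorm v <= 1 ->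
  enorm ((4 * h * mm (enorm u ^+ 2)) *: u - (4 * h * mm (enorm v ^+ 2)) *: v) <= 8 * enorm (u - v).
Proof.
move=> h0 h1 v1.
set a := 4 * h * mm (enorm u ^+ 2); set b := 4 * h * mm (enorm v ^+ 2).
have -> : a *: u - b *: v = a *: (u - v) + (a - b) *: v.
  by rewrite scalerBr scalerBl addrA subrK.
apply: le_trans (enormD _ _) _; rewrite !enormZ.
have eu := enorm_ge0 u; have ev := enorm_ge0 v; have euv := enorm_ge0 (u - v).
have ha0 : 0 <= a by rewrite /a mulr_ge0 ?mm_ge0 // mulr_ge0 //.
have ha : a <= 2.
  have := mm_le1 (sqr_ge0 (enorm u)); rewrite -/a /a => hm.
  have := mm_ge0 (enorm u ^+ 2); nra.
have hab : `|a - b| <= 4 * enorm (u - v).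
  rewrite /a /b -mulrBr normrM ger0_norm; last lra.
  have := mm_lip eu ev v1; have := enorm_rev u v.
  have := normr_ge0 (mm (enorm u ^+ 2) - mm (enorm v ^+ 2)).
  set P := `|mm _ - mm _|; set Q := `|_ - _|; move=> HP HQ HPQ.
  have H4 : P <= 2 * enorm (u - v) by lra.
  have H5 : 4 * h * P <= 2 * P by apply: ler_wpM2r => //; lra.
  lra.
rewrite (ger0_norm ha0).
have := normr_ge0 (a - b).
set Q := `|a - b|; move=> HQ.
have H6 : Q * enorm v <= Q by rewrite -[X in _ <= X]mulr1; apply: ler_wpM2l.
have H7 : a * enorm (u - v) <= 2 * enorm (u - v) by apply: ler_wpM2r.
have hab2 : Q <= 4 * enorm (u - v) := hab.
lra.
Qed.

Lemma enorm0 : enorm (0 : pt) = 0.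
Proof. by rewrite -(scale0r (0 : pt)) enormZ normr0 mul0r. Qed.

Lemma grad_bound (u v : pt) (h : R) : 0 <= h -> h <= 1/2 ->
  enorm ((4 * h * mm (enorm u ^+ 2)) *: u - (4 * h * mm (enorm v ^+ 2)) *: v) <= 8 * enorm (u - v).
Proof.
move=> h0 h1.
have [v1|v1] := leP (enorm v) 1; first exact: grad_core.
have [u1|u1] := leP (enorm u) 1.
  by rewrite (enormB_sym (_ *: u)) (enormB_sym u v); exact: grad_core.
have eu := enorm_ge0 u; have ev := enorm_ge0 v.
rewrite !mmE2; [|nra|nra].
rewrite !mulr0 !scale0r subrr enorm0 mulr_ge0 //; exact: enorm_ge0.
Qed.

End Final.

Close Scope classical_set_scope.
Local Open Scope ring_scope.
Theorem theoremB1 (R : realType) (d : nat) (hd : (0 < d)%N)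
    (A : algorithm R d) :
  exists (f : 'rV[R]_d -> R) (xstar : 'rV[R]_d),
    lipschitz_with 1 f /\
    grad_lipschitz_with 8 f /\
    (forall x y, f x - f y <= (expR 1)^-1) /\
    enorm xstar <= 10 /\
    (forall x, f xstar <= f x) /\
    (forall xo, run A f (2 ^ d) [::] = Some xo ->
       f xo - f xstar > (2 * expR 1)^-1).
Proof.
pose f0 := fun _ : 'rV[R]_d => (0 : R).
have [c [hc Hc]] := exists_far (R:=R) hd (pts_size A f0 (2 ^ d) [::]).
have he : 2 <= expR (1 : R) by have := expR_ge1Dx (1 : R); lra.
pose h : R := (expR 1)^-1.
have hpos : 0 < h by rewrite invr_gt0; lra.
have h1 : h <= 1/2.
  have : h * expR 1 = 1 by rewrite /h mulVf //; apply/eqP => e0; rewrite e0 in he; lra.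
  nra.
have Phi_bd : forall x, 0 <= Phi (Sq c x) <= 1.
  move=> x; rewrite /Phi sqr_ge0 /=.
  have := mm_le1 (Sq_ge0 c x); have := mm_ge0 (Sq c x); nra.
have Fc : F c (- h) c = - h.
  rewrite /F /G /Phi (_ : Sq c c = 0); last by rewrite /Sq big1 // => i _; rewrite subrr expr0n.
  by rewrite mmE1 ?ler01 // subr0 expr1n mulr1.
exists (F c (- h)), c.
split; first by move=> x y; apply: lip_F => //; exact: ltW.
split.
  split; first by move=> x; exact: F_diff.
  move=> x y; rewrite !F_grad !Sq_enorm !mulrN !mulNr !opprK.
  have -> : x - y = (x - c) - (y - c) by rewrite opprB addrA subrK.
  by apply: (grad_bound (x - c) (y - c)) => //; exact: ltW.
split.
  move=> x y; rewrite /F /G -/h.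
  have := Phi_bd x; have := Phi_bd y; move=> /andP[a1 a2] /andP[b1 b2].
  have b3 : 0 <= 1 - Phi (Sq c y) by lra.
  have := mulr_ge0 (ltW hpos) b1; have := mulr_ge0 (ltW hpos) b3.
  lra.
split; first exact: hc.
split.
  move=> x; rewrite Fc /F /G; have := Phi_bd x; nra.
move=> xo Hrun.
have Hrun' : run A f0 (2 ^ d) [::] = Some xo.
  rewrite -Hrun; symmetry; apply: run_eq => p pP; apply: oracle_far; exact: Hc.
have Hx := Hc _ (run_out Hrun').
rewrite Fc F_zero; last exact: ltW.
rewrite invfM -/h; lra.
Qed.
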